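(* Let $m\ge0$, $\mathbf x=(x_1,\dots,x_{m+1})$, $\mathbf y=(y_1,\dots,y_{m+1})$, $\bar{\mathbf x}=(\bar x_1,\dots,\bar x_{m+1})$, $\bar{\mathbf y}=(\bar y_1,\dots,\bar y_{m+1})$. Then $Z_{\mathrm{HT}}(2m+1;\bar{\mathbf x},\bar{\mathbf y})=Z_{\mathrm{HT}}(2m+1;\mathbf x,\mathbf y)$. Equivalently, for $\widetilde Z_{\mathrm{HT}}(2m+1;\mathbf x,\mathbf y)=\big[\prod_{i=1}^m x_i^{2m}y_i^{2m}\big]x_{m+1}^my_{m+1}^mZ_{\mathrm{HT}}(2m+1;\mathbf x,\mathbf y)$, \[ \widetilde Z_{\mathrm{HT}}(2m+1;\bar{\mathbf x},\bar{\mathbf y})=\Big[\prod_{i=1}^m x_i^{-4m}y_i^{-4m}\Big]x_{m+1}^{-2m}y_{m+1}^{-2m}\,\widetilde Z_{\mathrm{HT}}(2m+1;\mathbf x,\mathbf y). \]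
   Context: Notation: $\bar z=z^{-1}$, $\sigma(z)=z-z^{-1}$; $a$ is a fixed nonzero parameter. Vertex weights: at a vertex where a horizontal and a vertical line cross, the four incident edges are oriented with exactly two pointing in. Type 1: horizontal edges in, vertical out; type 2: horizontal out, vertical in; type 3: horizontal right, vertical up; type 4: horizontal left, vertical down; type 5: horizontal left, vertical up; type 6: horizontal right, vertical down. A vertex with spectral parameter $z$ has weight $\sigma(a^2)$ (types 1,2), $\sigma(az)$ (types 3,4), $\sigma(a\bar z)$ (types 5,6). A state is an orientation of internal edges satisfying the two-in rule at every vertex; the partition function is the sum over states of the product of vertex weights. Odd half-turn model $Z_{\mathrm{HT}}(2m+1;\mathbf x,\mathbf y)$: vertices $(r,j)$ with $1\le r\le 2m+1$ (from the top), $1\le j\le m$ (from the left), and $(r,m+1)$ with $m+2\le r\le 2m+1$; vertex $(r,j)$ has parameter $x_{\min(r,2m+2-r)}\bar y_j$. Edges join consecutive vertices in rows and columns. Left boundary edges point right (into the grid), top boundary edges of columns $1,\dots,m$ point up, bottom boundary edges of columns $1,\dots,m+1$ point down. The edge to the right of $(m+1,m)$ and the edge above $(m+2,m+1)$ form a single edge, pointing right out of $(m+1,m)$ iff pointing down into $(m+2,m+1)$. For each $r\le m$ the edges to the right of $(r,m)$ and of $(2m+2-r,m+1)$ form a single edge with one orientation (out of one vertex, into the other). For $m=0$ there are no vertices and $Z_{\mathrm{HT}}(1)=1$. *)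

(* Defs.v *)
From mathcomp Require Import all_boot all_order all_algebra.
Set Implicit Arguments. Unset Strict Implicit. Unset Printing Implicit Defensive.
Import Order.TTheory GRing.Theory.
Local Open Scope ring_scope.

Definition sigma {R : fieldType} (z : R) : R := z - z^-1.

(* Local configuration at a vertex, given by four booleans:
   hl = left edge points right, hr = right edge points right,
   vt = top edge points up,     vb = bottom edge points up. *)
Definition ice (hl hr vt vb : bool) : bool :=
  (hl + ~~ hr + ~~ vt + vb == 2)%N.

Definition vweight {R : fieldType} (a z : R) (hl hr vt vb : bool) : R :=
  match hl, hr, vt, vb with
  | true,  false, true,  false => sigma (a ^+ 2)  (* type 1 *)
  | false, true,  false, true  => sigma (a ^+ 2)  (* type 2 *)
  | true,  true,  true,  true  => sigma (a * z)   (* type 3 *)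
  | false, false, false, false => sigma (a * z)   (* type 4 *)
  | false, false, true,  true  => sigma (a / z)   (* type 5 *)
  | true,  true,  false, false => sigma (a / z)   (* type 6 *)
  | _, _, _, _ => 0
  end.

(* 0-based coordinates: row i in 0..2m (row r = i+1 from the top),
   column j in 0..m (column j+1 from the left). *)
Definition vtx (m i j : nat) : bool :=
  (j < m)%N || ((j == m) && (m < i)%N).

(* Edge labels (i, j, k):
   k = 0 : horizontal edge between vertices (i,j) and (i,j+1);
   k = 1 : vertical edge between (i,j) and (i+1,j);
   k = 2 (with i = 0) : glued edge number j, j in 0..m:
     for j < m it joins the right edge of (j, m-1) and the right edge of
     (2m-j, m); orientation true = pointing right out of (j, m-1)
     (hence pointing left, into (2m-j, m));
     for j = m it joins the right edge of (m, m-1) and the top edge of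
     (m+1, m); true = pointing right out of (m, m-1) = down into (m+1, m).
   Orientation of H edges: true = right; of V edges: true = up. *)
Definition is_edge (m i j k : nat) : bool :=
  if k == 0%N then ((j.+1 < m)%N || ((j.+1 == m) && (m < i)%N))
  else if k == 1%N then (i < 2 * m)%N && vtx m i j
  else (i == 0%N) && (0 < m)%N.

Definition stateT (m : nat) := {ffun 'I_(2 * m).+1 * 'I_m.+1 * 'I_3 -> bool}.

Definition st (m : nat) (f : stateT m) (k i j : nat) : bool :=
  f (inord i, inord j, inord k).

Definition hl m (f : stateT m) (i j : nat) : bool :=
  if j == 0%N then true else st f 0 i j.-1.
Definition hr m (f : stateT m) (i j : nat) : bool :=
  if (j.+1 < m)%N then st f 0 i j
  else if j.+1 == m then (if (m < i)%N then st f 0 i j else st f 2 0 i)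
  else ~~ st f 2 0 (2 * m - i).
Definition vt m (f : stateT m) (i j : nat) : bool :=
  if i == 0%N then true
  else if (j == m) && (i == m.+1) then ~~ st f 2 0 m
  else st f 1 i.-1 j.
Definition vb m (f : stateT m) (i j : nat) : bool :=
  if i == (2 * m)%N then false else st f 1 i j.

(* a state: orientation of the internal edges (non-edge labels fixed to
   false), obeying the two-in rule at every vertex *)
Definition is_state (m : nat) (f : stateT m) : bool :=
  [forall e : 'I_(2 * m).+1 * 'I_m.+1 * 'I_3,
      ~~ is_edge m e.1.1 e.1.2 e.2 ==> ~~ f e]
  && [forall i : 'I_(2 * m).+1, forall j : 'I_m.+1,
      vtx m i j ==> ice (hl f i j) (hr f i j) (vt f i j) (vb f i j)].

(* Z_HT(2m+1; x, y), with x_{k+1} = x k, y_{k+1} = y k (0-based) *)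
Definition ZHT {R : fieldType} (a : R) (m : nat) (x y : nat -> R) : R :=
  \sum_(f : stateT m | is_state f)
    \prod_(0 <= i < (2 * m).+1) \prod_(0 <= j < m.+1 | vtx m i j)
      vweight a (x (minn i (2 * m - i)) / y j)
        (hl f i j) (hr f i j) (vt f i j) (vb f i j).

Definition ZHTt {R : fieldType} (a : R) (m : nat) (x y : nat -> R) : R :=
  (\prod_(0 <= i < m) (x i ^+ (2 * m) * y i ^+ (2 * m)))
  * x m ^+ m * y m ^+ m * ZHT a m x y.

(* Main.v *)
Require Import Defs.
From mathcomp Require Import all_boot all_order all_algebra.
From mathcomp Require Import zify ring.
Set Implicit Arguments. Unset Strict Implicit.
Import GRing.Theory.

Lemma vweight_vflip (R : fieldType) (a z : R) c1 c2 c3 c4 :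
  vweight a z^-1%R c1 c2 (~~ c4) (~~ c3) = vweight a z c1 c2 c3 c4.
Proof. by case: c1; case: c2; case: c3; case: c4; rewrite /vweight ?invrK. Qed.

Lemma vweight_hflip (R : fieldType) (a z : R) c1 c2 c3 c4 :
  vweight a z^-1%R (~~ c2) (~~ c1) c3 c4 = vweight a z c1 c2 c3 c4.
Proof. by case: c1; case: c2; case: c3; case: c4; rewrite /vweight ?invrK. Qed.

Lemma ice_vflip c1 c2 c3 c4 : ice c1 c2 (~~ c4) (~~ c3) = ice c1 c2 c3 c4.
Proof. by case: c1; case: c2; case: c3; case: c4. Qed.

Lemma ice_hflip c1 c2 c3 c4 : ice (~~ c2) (~~ c1) c3 c4 = ice c1 c2 c3 c4.
Proof. by case: c1; case: c2; case: c3; case: c4. Qed.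

Definition phiv m (f : stateT m) (i j k : nat) : bool :=
  if is_edge m i j k then
    if k == 0%N then (if (j.+1 < m)%N then st f 0 (2 * m - i) j else st f 2 0 (2 * m - i))
    else if k == 1%N then (if (j < m)%N then ~~ st f 1 (2 * m - 1 - i) j else st f 1 i j)
    else (if (j < m)%N then st f 0 (2 * m - j) m.-1 else st f 2 0 m)
  else false.

Definition phi m (f : stateT m) : stateT m := [ffun e : (_ * _ * _) => phiv f (nat_of_ord e.1.1) (nat_of_ord e.1.2) (nat_of_ord e.2)].

Lemma st_phi m (f : stateT m) k i j : (i <= 2 * m)%N -> (j <= m)%N -> (k < 3)%N ->
  st (phi f) k i j = phiv f i j k.
Proof. by move=> hi hj hk; rewrite /st ffunE /= !inordK. Qed.

Ltac stc := match goal with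
  | |- st ?f ?k ?a ?b = st ?f ?k ?c ?d =>
      apply: (congr2 (st f k)); lia
  | |- (~~ st ?f ?k ?a ?b) = (~~ st ?f ?k ?c ?d) =>
      congr (~~ _); apply: (congr2 (st f k)); lia
  end.

Ltac go := repeat (case: ifPn => ? //=); try lia; try stc.

Ltac sps := repeat (rewrite st_phi; [|lia..]); rewrite /phiv /is_edge /vtx /=.
Ltac sp := rewrite st_phi; [|lia..]; rewrite /phiv /is_edge /vtx /=.

Lemma cfgA m (f : stateT m) i j : (i <= 2 * m)%N -> (j < m)%N ->
  [/\ hl (phi f) i j = hl f (2 * m-i) j, hr (phi f) i j = hr f (2 * m-i) j,
      vt (phi f) i j = ~~ vb f (2 * m-i) j & vb (phi f) i j = ~~ vt f (2 * m-i) j].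
Proof.
move=> hi hj; split.
- rewrite /hl; case: eqP => // j0. sp. go.
- rewrite /hr; case: ifPn => h1; [sp; go|]. case: ifPn => h2; last lia.
  case: ifPn => h3; sp; go.
- rewrite /vt /vb. case: (i =P 0%N) => h1; first by case: (_ =P _) => //; lia.
  case: (j =P m) => h2; first lia. rewrite /=. case: ifPn => h3; first lia. sp; go.
- rewrite /vt /vb. case: (i =P (2 * m)%N) => h1; first by case: (_ =P _) => //; lia.
  case: (_ =P _) => h2; first lia. case: (j =P m) => h3; first lia. rewrite /=. sp; go.
Qed.

Lemma cfgB m (f : stateT m) i : (i <= 2 * m)%N -> (m < i)%N ->
  [/\ hl (phi f) i m = ~~ hr f i m, hr (phi f) i m = ~~ hl f i m,
      vt (phi f) i m = vt f i m & vb (phi f) i m = vb f i m].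
Proof.
move=> hi hm; split.
- rewrite /hl /hr; case: eqP => m0; first lia. 
  case: ifPn => h1; first lia. case: ifPn => h2; first lia. rewrite negbK. sp; go.
- rewrite /hl /hr; case: eqP => m0; first lia. 
  case: ifPn => h1; first lia. case: ifPn => h2; first lia. sp; go.
- rewrite /vt; case: ifPn => h1; first lia. case: ifPn => h2; sp; go.
- rewrite /vb; case: (_ =P _) => h1 //. sp; go.
Qed.

Lemma st_val m (f : stateT m) (i : 'I_(2 * m).+1) (j : 'I_m.+1) (k : 'I_3) :
  st f k i j = f (i, j, k).
Proof. by rewrite /st !inord_val. Qed.

Lemma state_edge m (f : stateT m) : is_state f ->
  forall e : 'I_(2 * m).+1 * 'I_m.+1 * 'I_3, ~~ is_edge m e.1.1 e.1.2 e.2 -> f e = false.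
Proof. by case/andP => /forallP H _ e ne; apply/negbTE; move/implyP: (H e); apply. Qed.

Lemma state_ice m (f : stateT m) : is_state f -> forall i j,
  (i <= 2 * m)%N -> (j <= m)%N -> vtx m i j ->
  ice (hl f i j) (hr f i j) (vt f i j) (vb f i j).
Proof.
case/andP => _ /forallP H i j hi hj hv.
move/forallP: (H (inord i)) => /(_ (inord j)) /implyP.
by rewrite !inordK //; apply.
Qed.

Lemma phi_state m (f : stateT m) : is_state f -> is_state (phi f).
Proof.
move=> sf; apply/andP; split.
- apply/forallP => -[[i j] k] /=; apply/implyP => ne.
  by rewrite ffunE /phiv (negbTE ne).
- apply/forallP => i; apply/forallP => j; apply/implyP => hv.
  have hi := ltn_ord i; have hj' := ltn_ord j.
  case: (ltnP j m) => hj.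
  + have [-> -> -> ->] := cfgA f (i:=i) (j:=j) ltac:(lia) hj.
    rewrite ice_vflip; apply: state_ice => //; rewrite /vtx; lia.
  + have hm : (m < i)%N by move: hv; rewrite /vtx; lia.
    have ej : nat_of_ord j = m by lia.
    rewrite ej; have [-> -> -> ->] := cfgB f (i:=i) ltac:(lia) hm.
    rewrite ice_hflip; apply: state_ice => //; rewrite /vtx; lia.
Qed.

Lemma phi_inv m (f : stateT m) : is_state f -> phi (phi f) = f.
Proof.
move=> sf; apply/ffunP => -[[i j] k]; rewrite ffunE /=.
have hi := ltn_ord i; have hj := ltn_ord j.
case E: (is_edge m i j k); last first.
  by rewrite /phiv E (@state_edge m f sf (i, j, k)) // E.
rewrite -st_val /phiv E.
case: k E => [[|[|[|k]]] hk] //= E; rewrite /is_edge /vtx /= in E.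
all: go; sps; go; rewrite ?negbK; stc.
Qed.

Section W.
Local Open Scope ring_scope.

Lemma split_inner (R : fieldType) m i (F : nat -> R) :
  \prod_(0 <= j < m.+1 | vtx m i j) F j =
  (\prod_(0 <= j < m) F j) * (if (m < i)%N then F m else 1).
Proof.
rewrite big_mkcond big_nat_recr //= /vtx ltnn eqxx /=; congr (_ * _).
by apply: eq_big_nat => j /andP[_ hj]; rewrite hj.
Qed.

Lemma inv_div (R : fieldType) (u v : R) : u^-1 / v^-1 = (u / v)^-1.
Proof. by rewrite invf_div invrK mulrC. Qed.

Lemma W_phi (R : fieldType) (a : R) m (x y : nat -> R) (f : stateT m) :
  \prod_(0 <= i < (2 * m).+1) \prod_(0 <= j < m.+1 | vtx m i j)
      vweight a ((x (minn i (2 * m - i)))^-1 / (y j)^-1)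
        (hl (phi f) i j) (hr (phi f) i j) (vt (phi f) i j) (vb (phi f) i j)
  = \prod_(0 <= i < (2 * m).+1) \prod_(0 <= j < m.+1 | vtx m i j)
      vweight a (x (minn i (2 * m - i)) / y j)
        (hl f i j) (hr f i j) (vt f i j) (vb f i j).
Proof.
under eq_bigr do rewrite split_inner.
under [RHS]eq_bigr do rewrite split_inner.
rewrite !big_split /=; congr (_ * _).
- rewrite [RHS]big_nat_rev /=; apply: eq_big_nat => i /andP[_ hi].
  have -> : (0 + (2 * m).+1 - i.+1 = 2 * m - i)%N by lia.
  have -> : minn (2 * m - i) (2 * m - (2 * m - i)) = minn i (2 * m - i) by lia.
  apply: eq_big_nat => j /andP[_ hj].
  have [-> -> -> ->] := cfgA f (i:=i) (j:=j) ltac:(lia) hj.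
  by rewrite inv_div vweight_vflip.
- apply: eq_big_nat => i /andP[_ hi].
  case: ifPn => // hm.
  have [-> -> -> ->] := cfgB f (i:=i) ltac:(lia) hm.
  by rewrite inv_div vweight_hflip.
Qed.

End W.

Local Open Scope ring_scope.

Lemma pw (R : fieldType) (u : R) n : u != 0 -> u^-1 ^+ n = u ^- (2 * n) * u ^+ n.
Proof.
move=> u0; rewrite exprVn mul2n -addnn exprD invfM -mulrA mulVf ?mulr1 //.
exact: expf_neq0.
Qed.

Theorem lemma16 (R : fieldType) (a : R) (m : nat) (x y : nat -> R) :
  a != 0 ->
  (forall i, (i <= m)%N -> x i != 0) ->
  (forall i, (i <= m)%N -> y i != 0) ->
  ZHT a m (fun i => (x i)^-1) (fun i => (y i)^-1) = ZHT a m x y /\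
  ZHTt a m (fun i => (x i)^-1) (fun i => (y i)^-1) =
    (\prod_(0 <= i < m) (x i ^- (4 * m) * y i ^- (4 * m)))
    * x m ^- (2 * m) * y m ^- (2 * m) * ZHTt a m x y.
Proof.
move=> a0 hx hy.
have Z1 : ZHT a m (fun i => (x i)^-1) (fun i => (y i)^-1) = ZHT a m x y.
  rewrite /ZHT.
  pose psi (f : stateT m) := if is_state f then phi f else f.
  have psiK : involutive psi.
    move=> f; rewrite /psi; case sf: (is_state f); last by rewrite sf.
    by rewrite phi_state // phi_inv.
  rewrite (reindex_inj (can_inj psiK)).
  apply: eq_big => [f | f sf].
    by rewrite /psi; case sf: (is_state f) => //; rewrite phi_state.
  move: sf; rewrite /psi; case h: (is_state f) => sf; last by rewrite h in sf.
  exact: W_phi.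
split => //.
rewrite /ZHTt Z1.
have e4 : (4 * m = 2 * (2 * m))%N by lia.
under eq_big_nat => i /andP[_ hi].
  rewrite (pw (2 * m) (hx i (ltnW hi))) (pw (2 * m) (hy i (ltnW hi))) -e4.
  rewrite [_ * _ * (_ * _)]mulrACA.
  over.
rewrite big_split /= (pw m (hx m (leqnn m))) (pw m (hy m (leqnn m))).
rewrite [(2 * m)%N]mul2n.
set P1 := \prod_(0 <= i < m) _. set P2 := \prod_(0 <= i < m) _.
rewrite -!mul2n.
set A := x m ^- (2 * m). set B := y m ^- (2 * m).
set C := x m ^+ m. set D := y m ^+ m. set Z := ZHT a m x y.
ring.
Qed.
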